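(* Let $\pi$ be a positive (smooth) density on $\mathbb{R}^d$ and $\alpha,\beta>0$. Consider $$\text{(HK-KL)}\quad \dot\mu=\alpha\,\mathrm{div}\Big(\nabla\mu-\tfrac{\mu}{\pi}\nabla\pi\Big)-\beta\mu\log\Big(\tfrac{\mu}{\pi}\Big),$$ $$\text{(SHK-KL)}\quad \dot\rho=\alpha\,\mathrm{div}\Big(\nabla\rho-\tfrac{\rho}{\pi}\nabla\pi\Big)-\beta\rho\Big(\log\Big(\tfrac{\rho}{\pi}\Big)-\int_{\mathbb{R}^d}\rho\log\Big(\tfrac{\rho}{\pi}\Big)dx\Big).$$ (i) If $t\mapsto\mu(t)$ solves (HK-KL), then $t\mapsto\rho(t)=\frac{1}{z(t)}\mu(t)$ with $z(t)=\int_{\mathbb{R}^d}\mu(t,x)\,dx>0$ solves (SHK-KL), and $z$ satisfies the mass equation $$\dot z=-\beta z\log z-\beta z\int_{\mathbb{R}^d}\rho\log\Big(\tfrac{\rho}{\pi}\Big)dx.\qquad(\text{Mass-HK})$$ (ii) Conversely, if $t\mapsto\rho(t)$ (probability densities) solves (SHK-KL) and $\kappa$ is a positive solution of (Mass-HK) (with $z$ replaced by $\kappa$ and this $\rho$), then $t\mapsto\mu(t)=\kappa(t)\rho(t)$ solves (HK-KL); here $\kappa$ does not depend on $x$.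
   Context: Solutions are understood as classical solutions with sufficient decay at infinity so that integrals over $\mathbb{R}^d$ of the divergence terms vanish. (HK-KL) and (SHK-KL) are the Hellinger-Kantorovich and spherical Hellinger-Kantorovich gradient-flow equations of the KL divergence $\mathrm{D}_{\mathrm{KL}}(\cdot|\pi)$. *)

(* Defs.v *)
From HB Require Import structures.
From mathcomp Require Import all_boot all_order all_algebra.
From mathcomp Require Import all_classical all_reals all_analysis.
Set Implicit Arguments. Unset Strict Implicit. Unset Printing Implicit Defensive.
Import Order.TTheory GRing.Theory Num.Theory.
Import numFieldNormedType.Exports.
Local Open Scope classical_set_scope.
Local Open Scope ring_scope.

Section HKdefs.
Variables (R : realType) (d : nat).

Notation V := 'rV[R]_d.

Definition box (a b : V) : set V := [set x | forall i, a 0 i <= x 0 i <= b 0 i].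
Definition boxes : set (set V) := [set box ab.1 ab.2 | ab in [set: V * V]].

Definition Rd : Type := g_sigma_algebraType boxes.

(* lam is the Lebesgue measure on R^d: the volume of every box is the
   product of its side lengths (this characterizes Lebesgue measure on the
   Borel sigma-algebra). *)
Definition is_lebesgue (lam : {measure set Rd -> \bar R}) : Prop :=
  forall a b : V, (forall i, a 0 i <= b 0 i) ->
    lam (box a b) = (\prod_(i < d) (b 0 i - a 0 i))%:E.

Definition intRd (lam : {measure set Rd -> \bar R}) (f : V -> R) : R :=
  Rintegral lam [set: Rd] f.

Definition integrableRd (lam : {measure set Rd -> \bar R}) (f : V -> R) : Prop :=
  lam.-integrable [set: Rd] (fun x => (f x)%:E).

Definition evec (i : 'I_d) : V := delta_mx 0 i.
Definition partial (i : 'I_d) (f : V -> R) (x : V) : R := 'D_(evec i) f x.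
Definition grad (f : V -> R) (x : V) : V := \row_i partial i f x.
Definition divg (F : V -> V) (x : V) : R := \sum_(i < d) partial i (fun y => F y 0 i) x.

Definition flux (pi f : V -> R) : V -> V :=
  fun x => grad f x - (f x / pi x) *: grad pi x.

Definition KLint (lam : {measure set Rd -> \bar R}) (pi f : V -> R) : R :=
  intRd lam (fun x => f x * ln (f x / pi x)).

Definition solves_HK (alpha beta : R) (pi : V -> R) (I : set R) (mu : R -> V -> R) : Prop :=
  forall t, I t -> forall x : V,
    is_derive t 1 (fun s => mu s x)
      (alpha * divg (flux pi (mu t)) x - beta * mu t x * ln (mu t x / pi x)).

Definition solves_SHK (lam : {measure set Rd -> \bar R}) (alpha beta : R) (pi : V -> R)
    (I : set R) (rho : R -> V -> R) : Prop :=
  forall t, I t -> forall x : V,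
    is_derive t 1 (fun s => rho s x)
      (alpha * divg (flux pi (rho t)) x
       - beta * rho t x * (ln (rho t x / pi x) - KLint lam pi (rho t))).

Definition solves_mass (lam : {measure set Rd -> \bar R}) (beta : R) (pi : V -> R)
    (I : set R) (rho : R -> V -> R) (z : R -> R) : Prop :=
  forall t, I t ->
    is_derive t 1 z (- beta * z t * ln (z t) - beta * z t * KLint lam pi (rho t)).

Definition classical_density (pi : V -> R) (I : set R) (f : R -> V -> R) : Prop :=
  forall t, I t ->
    (forall x, 0 < f t x) /\
    (forall x, differentiable (f t) x) /\
    (forall x (i : 'I_d), differentiable (fun y => flux pi (f t) y 0 i) x).

(* Standing solution concept of the paper: classical solutions with sufficient
   decay/integrability at infinity: the density and its entropy density are
   integrable, the divergence term is integrable with vanishing integral, and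
   the total mass may be differentiated under the integral sign. *)
Definition decaying_density (lam : {measure set Rd -> \bar R}) (pi : V -> R)
    (I : set R) (f : R -> V -> R) : Prop :=
  classical_density pi I f /\
  forall t, I t ->
    [/\ integrableRd lam (f t),
        integrableRd lam (fun x => f t x * ln (f t x / pi x)),
        integrableRd lam (divg (flux pi (f t))),
        intRd lam (divg (flux pi (f t))) = 0 &
        is_derive t 1 (fun s => intRd lam (f s))
          (intRd lam (fun x => 'D_1 (fun s => f s x) t))].

End HKdefs.

(* Main.v *)
Require Import Defs.
From HB Require Import structures.
From mathcomp Require Import all_boot all_order all_algebra.
From mathcomp Require Import all_classical all_reals all_analysis.
Import Order.TTheory GRing.Theory Num.Theory.
Import numFieldNormedType.Exports.
Local Open Scope classical_set_scope.
Local Open Scope ring_scope.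
From mathcomp Require Import ring lra.

Lemma integrableRdZ (R : realType) (d : nat) (lam : {measure set Rd R d -> \bar R})
  (f : 'rV[R]_d -> R) (a : R) :
  integrableRd lam f -> integrableRd lam (fun x => a * f x).
Proof.
move=> hf; apply: (eq_integrable measurableT _ _ _ (integrableZl measurableT a hf)) => x _.
by rewrite EFinM.
Qed.

Lemma intRd_lin (R : realType) (d : nat) (lam : {measure set Rd R d -> \bar R})
  (f g : 'rV[R]_d -> R) (a b : R) :
  integrableRd lam f -> integrableRd lam g ->
  intRd lam (fun x => a * f x + b * g x) = a * intRd lam f + b * intRd lam g.
Proof.
move=> hf hg; rewrite /intRd RintegralD //.
all: try by rewrite !RintegralZl.
- by have := @integrableRdZ _ _ _ _ a hf.
- by have := @integrableRdZ _ _ _ _ b hg.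
Qed.

Lemma intRd_pos (R : realType) (d : nat) (lam : {measure set Rd R d -> \bar R})
  (f : 'rV[R]_d -> R) :
  is_lebesgue lam -> integrableRd lam f -> (forall x, 0 < f x) -> 0 < intRd lam f.
Proof.
move=> hl hf fpos.
have /integrableP[mf _] := hf.
have ge0 : 0 <= intRd lam f by apply: Rintegral_ge0 => x _; exact: ltW.
rewrite lt0r ge0 andbT; apply/negP => /eqP h0.
have fin : (\int[lam]_(x in [set: Rd R d]) (f x)%:E)%E \is a fin_num.
  exact: integrable_fin_num.
have h1 : (\int[lam]_(x in [set: Rd R d]) `|(f x)%:E|)%E = 0%E.
  transitivity (\int[lam]_(x in [set: Rd R d]) (f x)%:E)%E.
    by apply: eq_integral => x _; rewrite gee0_abs // lee_fin ltW.
  by rewrite -(fineK fin); move: h0; rewrite /intRd /Rintegral => ->.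
have := (ae_eq_integral_abs lam measurableT mf).1 h1.
move=> h; have [A [mA lA0 sub]] := h.
have bm : measurable (box (0 : 'rV[R]_d) (const_mx 1) : set (Rd R d)).
  apply: sub_gen_smallest; by exists (0, const_mx 1).
have hb := hl (0 : 'rV[R]_d) (const_mx 1) (fun i => ltac:(by rewrite !mxE ler01)).
have h00 : lam (box (0 : 'rV[R]_d) (const_mx 1)) = 0%E.
  apply: (subset_measure0 _ _ _ lA0) => // x _; apply: sub => /= /(_ I) /eqP.
  by rewrite eqe gt_eqF.
have := eq_trans (esym hb) h00.
rewrite (eq_bigr (fun=> 1)); last by move=> i _; rewrite !mxE subr0.
by rewrite prodr_const expr1n => /eqP; rewrite eqe oner_eq0.
Qed.

Lemma partialZ (R : realType) (d : nat) (f : 'rV[R]_d -> R) (c : R) i x :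
  differentiable f x -> partial i (fun y => c * f y) x = c * partial i f x.
Proof.
move=> df; rewrite /partial.
have -> : (fun y => c * f y) = c \*: f by [].
by rewrite deriveZ //; exact: diff_derivable.
Qed.

Lemma flux_scale (R : realType) (d : nat) (pi f : 'rV[R]_d -> R) (c : R) :
  (forall x, differentiable f x) ->
  flux pi (fun y => c * f y) = fun x => c *: flux pi f x.
Proof.
move=> df; rewrite /flux; apply/funext => x.
have -> : grad (fun y => c * f y) x = c *: grad f x.
  by apply/rowP => i; rewrite !mxE partialZ.
by rewrite scalerBr scalerA mulrA.
Qed.

Lemma divg_scale (R : realType) (d : nat) (F : 'rV[R]_d -> 'rV[R]_d) (c : R) x :
  (forall i, differentiable (fun y => F y 0 i) x) ->
  divg (fun y => c *: F y) x = c * divg F x.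
Proof.
move=> dF; rewrite /divg mulr_sumr; apply: eq_bigr => i _.
rewrite -partialZ //; congr partial; apply/funext => y; by rewrite mxE.
Qed.

Lemma divflux_scale (R : realType) (d : nat) (pi f : 'rV[R]_d -> R) (c : R) x :
  (forall x, differentiable f x) ->
  (forall i, differentiable (fun y => flux pi f y 0 i) x) ->
  divg (flux pi (fun y => c * f y)) x = c * divg (flux pi f) x.
Proof. by move=> df dF; rewrite flux_scale // divg_scale. Qed.
Theorem mainTheorem14 (R : realType) (d : nat)
    (lam : {measure set Rd R d -> \bar R}) (pi : 'rV[R]_d -> R)
    (alpha beta : R) (I : set R) :
  is_lebesgue lam ->
  (forall x, 0 < pi x) -> (forall x, differentiable pi x) ->
  0 < alpha -> 0 < beta -> open I ->
  (* (i) *)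
  (forall mu : R -> 'rV[R]_d -> R,
     decaying_density lam pi I mu ->
     solves_HK alpha beta pi I mu ->
     let z := fun t => intRd lam (mu t) in
     let rho := fun t x => mu t x / z t in
     (forall t, I t -> 0 < z t) /\
     solves_SHK lam alpha beta pi I rho /\
     solves_mass lam beta pi I rho z)
  /\
  (* (ii) *)
  (forall (rho : R -> 'rV[R]_d -> R) (kappa : R -> R),
     classical_density pi I rho ->
     (forall t, I t -> integrableRd lam (rho t) /\ intRd lam (rho t) = 1) ->
     solves_SHK lam alpha beta pi I rho ->
     (forall t, I t -> 0 < kappa t) ->
     solves_mass lam beta pi I rho kappa ->
     solves_HK alpha beta pi I (fun t x => kappa t * rho t x)).
Proof.
move=> hl pipos pidiff ha hb oI; split; last first.
  move=> rho kappa cd _ shk kpos mass t It x.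
  have hr := shk t It x; have hk := mass t It.
  have [rpos [rdiff fdiff]] := cd t It.
  have := is_deriveM hk hr.
  have -> : kappa * (fun s => rho s x) = (fun s => kappa s * rho s x) by [].
  move=> hd; apply: (is_derive_eq hd).
  have el : ln (kappa t * rho t x / pi x) = ln (kappa t) + ln (rho t x / pi x).
    by rewrite -mulrA lnM ?posrE ?divr_gt0 ?kpos.
  rewrite divflux_scale // el /GRing.scale /=.
  ring.
move=> mu [cd dec] hk z rho.
have zpos : forall t, I t -> 0 < z t.
  move=> t It; have [i1 _ _ _ _] := dec t It; have [mp _] := cd t It.
  exact: intRd_pos.
pose K t := intRd lam (fun x => mu t x * ln (mu t x / pi x)).
have zder : forall t, I t -> is_derive t 1 z (- beta * K t).
  move=> t It; have [i1 i2 i3 i4 i5] := dec t It.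
  have e : (fun x => 'D_1 (fun s => mu s x) t) = (fun x => alpha * divg (flux pi (mu t)) x + (-beta) * (mu t x * ln (mu t x / pi x))).
    apply/funext => x; have hkx := hk t It x; rewrite derive_val; ring.
  rewrite e intRd_lin // i4 in i5.
  apply: (is_derive_eq i5); rewrite /K; ring.
have lnrho : forall t x, I t -> ln (mu t x / z t / pi x) = ln (mu t x / pi x) - ln (z t).
  move=> t x It; have [mp _] := cd t It.
  rewrite mulrAC [LHS]lnM ?posrE ?divr_gt0 ?invr_gt0 ?zpos ?mp ?pipos // lnV ?posrE ?zpos //.
have KL : forall t, I t -> KLint lam pi (rho t) = K t / z t - ln (z t).
  move=> t It; have [i1 i2 i3 i4 i5] := dec t It.
  have zn0 : z t != 0 by rewrite gt_eqF ?zpos.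
  rewrite /KLint.
  have e : (fun x => rho t x * ln (rho t x / pi x)) = fun x => (z t)^-1 * (mu t x * ln (mu t x / pi x)) + (- (ln (z t) / z t)) * mu t x.
    apply/funext => x; rewrite /rho lnrho //; ring.
  rewrite e intRd_lin // -/(K t); rewrite /z; field; exact: zn0.
split => //; split.
  move=> t It x.
  have zn0 : z t != 0 by rewrite gt_eqF ?zpos.
  have := is_deriveM (hk t It x) (is_deriveV zn0 (zder t It)).
  have -> : (fun s => mu s x) * (fun s => (z s)^-1) = (fun s => rho s x) by [].
  move=> hd; apply: (is_derive_eq hd).
  rewrite KL //.
  have -> : rho t = fun y => (z t)^-1 * mu t y by apply/funext => y; rewrite /rho mulrC.
  have [_ [mdiff fdiff]] := cd t It.
  rewrite divflux_scale //.
  rewrite ![(z t)^-1 * mu t x]mulrC (lnrho t x It) /GRing.scale /=.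
  field; exact: zn0.
move=> t It.
have zn0 : z t != 0 by rewrite gt_eqF ?zpos.
apply: (is_derive_eq (zder t It)); rewrite KL //; field; exact: zn0.
Qed.
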